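(* Let $A$ be a finite non-empty alphabet and $\mathbf a,\mathbf b,\mathbf c,\mathbf d\in A^+$. If $\mathbf a:\mathbf b::_{SY}\mathbf c:\mathbf d$, then $\mathbf a:\mathbf b::\mathbf c:\mathbf d$ holds in $(A^+,\cdot,A^+)$.
   Context: $A^+$ is the set of non-empty finite words over $A$. $\mathbf a:\mathbf b::_{SY}\mathbf c:\mathbf d$ means: $\mathbf a=a_1\ldots a_n$, $\mathbf b=b_1\ldots b_n$, $\mathbf c=c_1\ldots c_n$, $\mathbf d=d_1\ldots d_n$ for some letters $a_i,b_i,c_i,d_i\in A$ and $n\ge0$ such that for every $1\le i\le n$, ($a_i=b_i$ and $c_i=d_i$) or ($a_i=c_i$ and $b_i=d_i$). $(A^+,\cdot,A^+)$ is the algebra with universe $A^+$, concatenation, and every non-empty word as a constant. Terms are built from a denumerable variable set, concatenation and these constants; $X(s)$ is the set of variables of $s$. A justification is a pair $s\to t$ with $X(t)\subseteq X(s)$. $\uparrow(\mathbf a\to\mathbf b)$ is the set of justifications $s\to t$ with $\mathbf a=s(\mathbf o)$, $\mathbf b=t(\mathbf o)$ for some tuple $\mathbf o$ over $A^+$; $\uparrow(\mathbf a\to\mathbf b:\!\cdot\,\mathbf c\to\mathbf d):=\uparrow(\mathbf a\to\mathbf b)\cap\uparrow(\mathbf c\to\mathbf d)$. A justification is trivial if it lies in all sets $\uparrow(\mathbf a'\to\mathbf b':\!\cdot\,\mathbf c'\to\mathbf d')$. $\mathbf a\to\mathbf b:\!\cdot\,\mathbf c\to\mathbf d$ holds iff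 either (i) all justifications in $\uparrow(\mathbf a\to\mathbf b)\cup\uparrow(\mathbf c\to\mathbf d)$ are trivial, or (ii) $J_{\mathbf d}:=\uparrow(\mathbf a\to\mathbf b:\!\cdot\,\mathbf c\to\mathbf d)$ contains a non-trivial justification and for every $\mathbf d'$, $J_{\mathbf d}\subseteq J_{\mathbf d'}$ implies $J_{\mathbf d'}$ contains a non-trivial justification and $J_{\mathbf d'}\subseteq J_{\mathbf d}$ (ignoring trivial justifications). $\mathbf a:\mathbf b::\mathbf c:\mathbf d$ iff $\mathbf a\to\mathbf b:\!\cdot\,\mathbf c\to\mathbf d$, $\mathbf b\to\mathbf a:\!\cdot\,\mathbf d\to\mathbf c$, $\mathbf c\to\mathbf d:\!\cdot\,\mathbf a\to\mathbf b$, $\mathbf d\to\mathbf c:\!\cdot\,\mathbf b\to\mathbf a$ all hold. *)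

(* Defs.v *)
From mathcomp Require Import all_boot.
Set Implicit Arguments. Unset Strict Implicit. Unset Printing Implicit Defensive.

(* Terms of the algebra (A^+, ., A^+): variables (indexed by nat), constants
   (every non-empty word, encoded as head letter + tail word), concatenation. *)
Inductive term (A : Type) : Type :=
| TVar : nat -> term A
| TCst : A -> seq A -> term A
| TCat : term A -> term A -> term A.

Arguments TVar {A} _.

Fixpoint tvars (A : Type) (s : term A) : seq nat :=
  match s with
  | TVar n => [:: n]
  | TCst _ _ => [::]
  | TCat s1 s2 => tvars s1 ++ tvars s2
  end.

Fixpoint teval (A : Type) (o : nat -> seq A) (s : term A) : seq A :=
  match s with
  | TVar n => o n
  | TCst x w => x :: w
  | TCat s1 s2 => teval o s1 ++ teval o s2
  end.

Section Analogy.
Variable A : eqType.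

Definition justification := (term A * term A)%type.

Definition is_just (j : justification) : Prop :=
  {subset tvars j.2 <= tvars j.1}.

Definition up (a b : seq A) (j : justification) : Prop :=
  is_just j /\
  exists o : nat -> seq A, (forall n, o n != [::]) /\
    teval o j.1 = a /\ teval o j.2 = b.

Definition up2 (a b c d : seq A) (j : justification) : Prop :=
  up a b j /\ up c d j.

Definition trivial_just (j : justification) : Prop :=
  forall a' b' c' d' : seq A, a' != [::] -> b' != [::] -> c' != [::] ->
    d' != [::] -> up2 a' b' c' d' j.

Definition arrow_prop (a b c d : seq A) : Prop :=
  (forall j, up a b j \/ up c d j -> trivial_just j)
  \/
  ((exists j, up2 a b c d j /\ ~ trivial_just j) /\
   forall d' : seq A, d' != [::] ->
     (forall j, up2 a b c d j -> ~ trivial_just j -> up2 a b c d' j) ->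
     (exists j, up2 a b c d' j /\ ~ trivial_just j) /\
     (forall j, up2 a b c d' j -> ~ trivial_just j -> up2 a b c d j)).

Definition analogy (a b c d : seq A) : Prop :=
  arrow_prop a b c d /\ arrow_prop b a d c /\
  arrow_prop c d a b /\ arrow_prop d c b a.

Fixpoint sy (a b c d : seq A) : Prop :=
  match a, b, c, d with
  | [::], [::], [::], [::] => True
  | x :: a', y :: b', z :: c', w :: d' =>
      ((x = y /\ z = w) \/ (x = z /\ y = w)) /\ sy a' b' c' d'
  | _, _, _, _ => False
  end.

End Analogy.

(* Main.v *)
Require Import Defs.
From mathcomp Require Import all_boot.
From mathcomp Require Import zify.
Set Implicit Arguments. Unset Strict Implicit.

Section Helpers.
Variable A : eqType.

Fixpoint nleaves (s : term A) : nat :=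
  match s with TCat s1 s2 => nleaves s1 + nleaves s2 | _ => 1 end.

Lemma nleaves_pos (s : term A) : 0 < nleaves s.
Proof. by elim: s => //= s1 IH1 s2 IH2; rewrite addn_gt0 IH1. Qed.

Lemma teval_size (o : nat -> seq A) (Ho : forall n, o n != [::]) s :
  nleaves s <= size (teval o s).
Proof.
elim: s => [n|x w|s1 IH1 s2 IH2] //=.
- by rewrite lt0n size_eq0.
- by rewrite size_cat leq_add.
Qed.

Lemma teval_ext (o1 o2 : nat -> seq A) (t : term A) :
  {in tvars t, forall n, o1 n = o2 n} -> teval o1 t = teval o2 t.
Proof.
elim: t => [n|x w|s1 IH1 s2 IH2] //= H.
- by apply: H; rewrite inE.
- rewrite IH1 ?IH2 // => n Hn; apply: H; rewrite mem_cat Hn ?orbT //.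
Qed.

Lemma key (o1 o2 : nat -> seq A) (Ho1 : forall n, o1 n != [::])
  (Ho2 : forall n, o2 n != [::]) s :
  teval o1 s = teval o2 s -> size (teval o1 s) = nleaves s ->
  {in tvars s, forall n, o1 n = o2 n}.
Proof.
elim: s => [n|x w|s1 IH1 s2 IH2] /=.
- by move=> H _ m; rewrite inE => /eqP ->.
- by [].
- move=> Heq Hs.
  have B11 := teval_size Ho1 s1. have B12 := teval_size Ho1 s2.
  have B21 := teval_size Ho2 s1. have B22 := teval_size Ho2 s2.
  have Hs2 : size (teval o2 s1 ++ teval o2 s2) = nleaves s1 + nleaves s2
    by rewrite -Heq.
  rewrite size_cat in Hs. rewrite size_cat in Hs2.
  have E1 : size (teval o1 s1) = size (teval o2 s1) by lia.
  move/eqP: Heq; rewrite (eqseq_cat _ _ E1) => /andP [/eqP H1 /eqP H2].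
  move=> n; rewrite mem_cat => /orP [Hn|Hn].
  + by apply: IH1 => //; lia.
  + by apply: IH2 => //; lia.
Qed.

Lemma det (o1 o2 : nat -> seq A) (Ho1 : forall n, o1 n != [::])
  (Ho2 : forall n, o2 n != [::]) (j : justification A) :
  is_just j -> teval o1 j.1 = teval o2 j.1 -> size (teval o1 j.1) = nleaves j.1 ->
  teval o1 j.2 = teval o2 j.2.
Proof.
move=> Hj Heq Hs; apply: teval_ext => n Hn.
by apply: (key Ho1 Ho2 Heq Hs); apply: Hj.
Qed.

Lemma no_trivial (x : A) (j : justification A) : ~ trivial_just j.
Proof.
move=> T.
have [[Hj [o1 [Ho1 [E1 F1]]]] _] := T [:: x] [:: x] [:: x] [:: x] isT isT isT isT.
have [[_ [o2 [Ho2 [E2 F2]]]] _] := T [:: x] [:: x; x] [:: x] [:: x] isT isT isT isT.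
have Hs : size (teval o1 j.1) = nleaves j.1.
  have := teval_size Ho1 j.1; have := nleaves_pos j.1; rewrite E1 /=; lia.
have := det Ho1 Ho2 Hj; rewrite -Hs E1 E2 F1 F2 => /(_ erefl erefl) //.
Qed.


Fixpoint build (a b c d : seq A) (i : nat) : justification A :=
  match a, b, c, d with
  | x :: a', y :: b', z :: c', w :: d' =>
    let l := if (x == y) && (z == w) then (TVar i, TVar i)
             else (TCst x [::], TCst y [::]) in
    if a' is [::] then l
    else let r := build a' b' c' d' i.+1 in (TCat l.1 r.1, TCat l.2 r.2)
  | _, _, _, _ => (TVar 0, TVar 0)
  end.

Lemma build_ok (x0 : A) a : forall b c d i (o1 o2 : nat -> seq A),
  sy a b c d -> a != [::] ->
  (forall k, k < size a -> o1 (i+k) = [:: nth x0 a k] /\ o2 (i+k) = [:: nth x0 c k]) ->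
  teval o1 (build a b c d i).1 = a /\ teval o1 (build a b c d i).2 = b /\
  teval o2 (build a b c d i).1 = c /\ teval o2 (build a b c d i).2 = d /\
  nleaves (build a b c d i).1 = size a /\
  tvars (build a b c d i).2 = tvars (build a b c d i).1.
Proof.
elim: a => [//|x a IH] [//|y b] [//|z c] [//|w d] i o1 o2 /= [Hl Hs] _ Ho.
have [O1 O2] := Ho 0 isT; rewrite addn0 /= in O1 O2.
have Hleaf : let l := if (x == y) && (z == w) then (TVar i, TVar i)
             else (TCst x [::], TCst y [::]) in
  [/\ teval o1 l.1 = [:: x], teval o1 l.2 = [:: y], teval o2 l.1 = [:: z],
      teval o2 l.2 = [:: w] & nleaves l.1 = 1 /\ tvars l.2 = tvars l.1].
  case: ifP => /= [/andP [/eqP <- /eqP <-]|H]; first by rewrite O1 O2.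
  case: Hl => [[E1 E2]|[E1 E2]]; last by rewrite E1 E2.
  by move: H; rewrite E1 E2 !eqxx.
move: Hleaf; set l := (if _ then _ else _) => -[L1 L2 L3 L4 [L5 L6]].
case: a IH Hs Ho => [|x' a] IH Hs Ho.
  by clear Ho; case: b c d Hs => [|??] [|??] [|??] //= _; rewrite L1 L2 L3 L4 L5 L6.
have Ho' : forall k, k < size (x' :: a) ->
  o1 (i.+1 + k) = [:: nth x0 (x' :: a) k] /\ o2 (i.+1 + k) = [:: nth x0 c k].
  by move=> k Hk; rewrite addSnnS; apply: (Ho k.+1).
have [R1 [R2 [R3 [R4 [R5 R6]]]]] := IH b c d i.+1 o1 o2 Hs isT Ho'.
by rewrite /= L1 L2 L3 L4 L5 L6 R1 R2 R3 R4 R5 R6.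
Qed.


Lemma sy_size (a b c d : seq A) : sy a b c d -> size a = size c.
Proof.
elim: a b c d => [|x a IH] [|y b] [|z c] [|w d] //= [_ H].
by rewrite (IH _ _ _ H).
Qed.

Lemma sy_perm (a b c d : seq A) : sy a b c d ->
  [/\ sy b a d c, sy c d a b & sy d c b a].
Proof.
elim: a b c d => [|x a IH] [|y b] [|z c] [|w d] //= [H1 H2].
have [P1 P2 P3] := IH _ _ _ H2.
split; split=> //; case: H1 => [[-> ->]|[-> ->]]; by [left | right].
Qed.

Lemma arrow_ok (x0 : A) (a b c d : seq A) :
  sy a b c d -> a != [::] -> arrow_prop a b c d.
Proof.
move=> Hsy Ha.
pose o1 := fun n => [:: nth x0 a n]. pose o2 := fun n => [:: nth x0 c n].
have Ho1 : forall n, o1 n != [::] by [].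
have Ho2 : forall n, o2 n != [::] by [].
have [R1 [R2 [R3 [R4 [R5 R6]]]]] :=
  @build_ok x0 a b c d 0 o1 o2 Hsy Ha (fun k _ => conj erefl erefl).
set j0 := build a b c d 0 in R1 R2 R3 R4 R5 R6.
have Hj : is_just j0 by rewrite /is_just R6.
have Hup : up2 a b c d j0.
  by split; split=> //; [exists o1 | exists o2].
right; split; first by exists j0; split=> //; exact: (@no_trivial x0 j0).
move=> d' _ H.
have [_ [_ [o [Ho [Ec Ed]]]]] := H j0 Hup ((@no_trivial x0 j0)).
have Hd : d' = d.
  rewrite -Ed -R4; apply: (det Ho Ho2 Hj); first by rewrite Ec R3.
  by rewrite Ec R5 (sy_size Hsy).
rewrite Hd; split; first by exists j0; split; [exact: Hup | exact: (@no_trivial x0 j0)].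
by move=> j Hj' _.
Qed.

End Helpers.

Theorem mainTheorem16 (A : finType) (hA : 0 < #|A|) (a b c d : seq A) :
  a != [::] -> b != [::] -> c != [::] -> d != [::] ->
  sy a b c d -> analogy a b c d.
Proof.
case: a => [//|x0 a'] _ Hb Hc Hd Hsy.
have [P1 P2 P3] := sy_perm Hsy.
split; first exact: arrow_ok Hsy isT.
split; first exact: arrow_ok P1 Hb.
split; first exact: arrow_ok P2 Hc.
exact: arrow_ok P3 Hd.
Qed.
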